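(* Let $r\in\{0,1\}$. If a vector $(x_\alpha,\dots,x_1)$ is $r$-realizable, then every vector $(y_\alpha,\dots,y_1)$ with $x_i\le y_i$ for all $1\le i\le\alpha$ is $r$-realizable.
   Context: All graphs are finite, nonempty, and reflexive (every vertex has a loop). $N[v]$ is the closed neighborhood of $v$ (including $v$). For distinct $v,w$, $w$ strictly corners $v$ if $N[v]\subsetneq N[w]$; $v$ is then a strict corner. A vertex dominates a set if adjacent to all its vertices. Corner ranking: set $G^{(1)}=G$, $k=1$. If $G^{(k)}$ is a clique, give all its vertices rank $k$ and stop. Else if $G^{(k)}$ has no strict corners, give all its vertices rank $\infty$ and stop. Else give every strict corner of $G^{(k)}$ rank $k$, delete them to get $G^{(k+1)}$ (induced subgraph), increase $k$ and repeat. The corner rank is the largest rank of a vertex; $X_k$ is the set of rank-$k$ vertices. A graph is cop-win iff its corner rank is finite. A graph of finite corner rank $\alpha\ge2$ is of type 1 if some (equivalently every) vertex of rank $\alpha$ dominates $V(G^{(\alpha-1)})$, and of type 0 otherwise. A vector is a finite list of positive integers. The rank cardinality vector is $(x_\alpha,\dots,x_1)$ with $x_k=|X_k|$. A vector is $r$-realizable if it is the rank cardinality vector of some cop-win graph of type $r$. *)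

(* Defs.v *)
From mathcomp Require Import all_boot.
Set Implicit Arguments. Unset Strict Implicit. Unset Printing Implicit Defensive.

Definition refl_graph (T : finType) (adj : rel T) : Prop :=
  (0 < #|T|) /\ reflexive adj /\ symmetric adj.

Section CornerRank.
Variables (T : finType) (adj : rel T).

Definition nbhd (S : {set T}) (v : T) : {set T} := [set w in S | adj v w].

Definition strict_corner (S : {set T}) (v : T) : bool :=
  (v \in S) && [exists w in S, (w != v) && (nbhd S v \proper nbhd S w)].

Definition corners (S : {set T}) : {set T} := [set v in S | strict_corner S v].

Definition is_clique (S : {set T}) : bool :=
  [forall v in S, forall w in S, adj v w].

Definition rank_step (S : {set T}) : {set T} :=
  if is_clique S then S else S :\: corners S.

(* stage k = vertex set of G^(k+1) *)
Definition stage (k : nat) : {set T} := iter k rank_step setT.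

(* G has finite corner rank alpha: G^(alpha) is the first clique *)
Definition corner_rank (alpha : nat) : Prop :=
  0 < alpha /\ is_clique (stage alpha.-1) /\
  (forall j, j < alpha.-1 -> ~~ is_clique (stage j)).

Definition Xrank (alpha k : nat) : {set T} :=
  if k == alpha then stage k.-1 else stage k.-1 :\: stage k.

(* type 1: some vertex of rank alpha dominates V(G^(alpha-1)) *)
Definition type1 (alpha : nat) : Prop :=
  exists2 v, v \in Xrank alpha alpha &
    forall u, u \in stage alpha.-2 -> adj v u.

Definition has_type (alpha r : nat) : Prop :=
  2 <= alpha /\ ((r = 1 /\ type1 alpha) \/ (r = 0 /\ ~ type1 alpha)).

Definition rank_card_vector (alpha : nat) : seq nat :=
  [seq #|Xrank alpha k| | k <- rev (iota 1 alpha)].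

End CornerRank.

(* a vector is r-realizable if it is the rank cardinality vector of some
   cop-win graph of type r *)
Definition realizable (r : nat) (x : seq nat) : Prop :=
  exists (T : finType) (adj : rel T) (alpha : nat),
    refl_graph adj /\ corner_rank adj alpha /\ has_type adj alpha r /\
    rank_card_vector adj alpha = x.

(* Main.v *)
Require Import Defs.
From mathcomp Require Import all_boot.
From mathcomp Require Import zify.
Set Implicit Arguments. Unset Strict Implicit. Unset Printing Implicit Defensive.

Definition pull (T T' : finType) (adj : rel T) (f : T' -> T) : rel T' :=
  fun a b => adj (f a) (f b).

Section Blow.
Variables (T T' : finType) (adj : rel T) (f : T' -> T).
Hypothesis fsurj : forall x, exists x', f x' = x.
Local Notation adj' := (pull adj f).

Lemma nbhd_pre (S : {set T}) a : nbhd adj' (f @^-1: S) a = f @^-1: nbhd adj S (f a).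
Proof. by apply/setP => b; rewrite /nbhd !inE. Qed.

Lemma pre_subset (A B : {set T}) : (f @^-1: A \subset f @^-1: B) = (A \subset B).
Proof.
apply/idP/idP => H; last exact: preimsetS.
apply/subsetP => x xA; have [x' fx] := fsurj x.
have : x' \in f @^-1: A by rewrite inE fx.
by move/(subsetP H); rewrite inE fx.
Qed.

Lemma pre_proper (A B : {set T}) : (f @^-1: A \proper f @^-1: B) = (A \proper B).
Proof. by rewrite /proper !pre_subset. Qed.

Lemma sc_pre (S : {set T}) a : strict_corner adj' (f @^-1: S) a = strict_corner adj S (f a).
Proof.
rewrite /strict_corner inE; congr (_ && _); apply/existsP/existsP.
- case=> w /andP[wS /andP[_ H]]; exists (f w).
  rewrite inE in wS; rewrite !nbhd_pre pre_proper in H.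
  rewrite wS H andbT /=.
  by apply/eqP => E; move: H; rewrite E properxx.
- case=> w /andP[wS /andP[_ H]]; have [w' fw'] := fsurj w; exists w'.
  rewrite inE fw' wS !nbhd_pre pre_proper fw' H andbT /=.
  by apply/eqP => E; move: H; rewrite -fw' E properxx.
Qed.

Lemma corners_pre (S : {set T}) : corners adj' (f @^-1: S) = f @^-1: corners adj S.
Proof. by apply/setP => a; rewrite /corners !inE sc_pre. Qed.

Lemma clique_pre (S : {set T}) : is_clique adj' (f @^-1: S) = is_clique adj S.
Proof.
apply/forallP/forallP => H.
- move=> x; apply/implyP => xS; apply/forallP => y; apply/implyP => yS.
  have [x' fx] := fsurj x; have [y' fy] := fsurj y.
  have := H x'; rewrite inE fx xS /= => /forallP/(_ y').
  by rewrite inE fy yS /= /pull fx fy.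
- move=> x; apply/implyP; rewrite inE => xS; apply/forallP => y; apply/implyP.
  rewrite inE => yS.
  by have := H (f x); rewrite xS /= => /forallP/(_ (f y)); rewrite yS.
Qed.

Lemma step_pre (S : {set T}) : rank_step adj' (f @^-1: S) = f @^-1: rank_step adj S.
Proof.
rewrite /rank_step clique_pre; case: ifP => // _.
by rewrite corners_pre preimsetD.
Qed.

Lemma stage_pre k : stage adj' k = f @^-1: stage adj k.
Proof.
elim: k => [|k IH]; first by rewrite /stage /= preimsetT.
change (rank_step adj' (stage adj' k) = f @^-1: rank_step adj (stage adj k)).
by rewrite IH step_pre.
Qed.

Lemma cr_pre alpha : corner_rank adj' alpha <-> corner_rank adj alpha.
Proof.
rewrite /corner_rank stage_pre clique_pre; split.
- case=> a [b c]; do 2 split => //; move=> j jl; rewrite -clique_pre -stage_pre; exact: c.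
- case=> a [b c]; do 2 split => //; move=> j jl; rewrite stage_pre clique_pre; exact: c.
Qed.

Lemma X_pre alpha k : Xrank adj' alpha k = f @^-1: Xrank adj alpha k.
Proof. by rewrite /Xrank !stage_pre; case: ifP => // _; rewrite preimsetD. Qed.

Lemma type1_pre alpha : type1 adj' alpha <-> type1 adj alpha.
Proof.
split.
- case=> v; rewrite X_pre inE => vX H; exists (f v) => // u uS.
  have [u' fu] := fsurj u.
  by have := H u'; rewrite stage_pre inE fu /pull => h; rewrite -fu; apply: h.
- case=> v vX H; have [v' fv] := fsurj v; exists v'.
    by rewrite X_pre inE fv.
  by move=> u; rewrite stage_pre inE => uS; rewrite /pull fv; apply: H.
Qed.

Lemma type_pre alpha r : has_type adj' alpha r <-> has_type adj alpha r.
Proof. rewrite /has_type; have := type1_pre alpha; tauto. Qed.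

Lemma refl_pre : 0 < #|T'| -> refl_graph adj -> refl_graph adj'.
Proof.
move=> c [_ [Hr Hs]]; split => //; split.
- by move=> a; apply: Hr.
- by move=> a b; apply: Hs.
Qed.

Lemma vec_pre alpha : rank_card_vector adj' alpha =
  [seq #|f @^-1: Xrank adj alpha k| | k <- rev (iota 1 alpha)].
Proof. by apply: eq_map => k; rewrite X_pre. Qed.

End Blow.

Lemma card_opt (T : finType) (v0 : T) (X : {set T}) :
  #|(odflt v0) @^-1: X| = #|X| + (v0 \in X).
Proof.
rewrite (cardsD1 None) inE /= addnC; congr (_ + _).
have -> : (odflt v0 @^-1: X) :\ None = Some @: X.
  apply/setP => o; case: o => [x|]; rewrite !inE /=.
    by rewrite mem_imset //; move=> a b [].
  by apply/esym/imsetP; case.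
rewrite card_imset //; by move=> a b [].
Qed.

Section Stages.
Variables (T : finType) (adj : rel T).

Lemma stageS k : stage adj k.+1 = rank_step adj (stage adj k).
Proof. by []. Qed.

Lemma rank_step_sub S : rank_step adj S \subset S.
Proof. rewrite /rank_step; case: ifP => _; [exact: subxx | exact: subsetDl]. Qed.

Lemma stage_sub j k : j <= k -> stage adj k \subset stage adj j.
Proof.
move/subnK <-; elim: (k - j) => [|d IH] //.
rewrite addSn stageS; exact: subset_trans (rank_step_sub _) IH.
Qed.

Lemma stage_ne (x0 : T) k : stage adj k != set0.
Proof.
elim: k => [|k IH].
  by apply/set0Pn; exists x0; rewrite /stage /= inE.
rewrite stageS /rank_step; case: ifP => // _.
case/set0Pn: IH => v vS; apply/set0Pn.
set S := stage adj k.
case: (@arg_maxnP _ v (mem S) (fun i => #|nbhd adj S i|) vS) => m mS mmax.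
have mS2 : m \in S := mS.
exists m; rewrite !inE mS2 andbT /=; apply/negP => /andP[_ /existsP[w /andP[wS /andP[_ Hp]]]].
have := mmax w wS; have := proper_card Hp; lia.
Qed.

Lemma stage_const k d : stage adj k.+1 = stage adj k -> stage adj (k + d) = stage adj k.
Proof.
move=> E; elim: d => [|d IH]; first by rewrite addn0.
by rewrite addnS stageS IH -stageS E.
Qed.

Lemma X_ne alpha k : refl_graph adj -> corner_rank adj alpha -> 0 < k <= alpha ->
  Xrank adj alpha k != set0.
Proof.
move=> [c _] [a0 [cl ncl]] /andP[k0 ka].
have [x0 _] : exists x0 : T, true.
  by case/card_gt0P: c => x _; exists x.
rewrite /Xrank; case: ifP => [_ | ne]; first exact: (stage_ne x0 k.-1).
case: k k0 ka ne => // k _ ka /negbT ne /=.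
apply/negP => /eqP; move/eqP; rewrite setD_eq0 => sub.
have E : stage adj k.+1 = stage adj k.
  by apply/eqP; rewrite eqEsubset sub stage_sub.
have := stage_const (alpha.-1 - k) E; rewrite subnKC; last by lia.
move=> E2; have := ncl k; rewrite -E2 cl => /(_ _)/negP; apply; lia.
Qed.

Lemma X_in_stage alpha j : Xrank adj alpha j.+1 \subset stage adj j.
Proof. rewrite /Xrank; case: ifP => _ /=; [exact: subxx| exact: subsetDl]. Qed.

Lemma X_disj alpha k j v : 0 < k <= alpha -> 0 < j <= alpha -> j != k ->
  v \in Xrank adj alpha k -> v \notin Xrank adj alpha j.
Proof.
case: k => // k; case: j => // j /andP[_ ka] /andP[_ ja] ne vX.
have vk := subsetP (X_in_stage alpha k) v vX.
case: (ltngtP j k) => [lt|gt|eq]; last by rewrite eq eqxx in ne.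
- rewrite /Xrank; case: eqP => [e|_]; first by lia.
  rewrite inE negb_and negbK.
  by rewrite (subsetP (stage_sub lt) v vk).
- have kna : k.+1 != alpha by apply/eqP; lia.
  move: vX; rewrite /Xrank (negPf kna) inE => /andP[vn _].
  apply/negP => /(subsetP (X_in_stage alpha j)) /(subsetP (stage_sub gt)).
  by rewrite (negPf vn).
Qed.

End Stages.

Lemma step_lemma r x i : realizable r x -> i < size x -> forall x',
  size x' = size x -> (forall j, j < size x -> nth 0 x' j = nth 0 x j + (j == i)) ->
  realizable r x'.
Proof.
case=> T [adj [alpha [RG [CR [HT Hx]]]]] ilt x' sz Hnth.
have sa : size x = alpha by rewrite -Hx size_map size_rev size_iota.
have k1 : 0 < alpha - i <= alpha by apply/andP; split; lia.
case/set0Pn: (X_ne RG CR k1) => v0 v0X.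
have fs : forall x : T, exists x' : option T, odflt v0 x' = x.
  by move=> y; exists (Some y).
exists (option T), (pull adj (odflt v0)), alpha.
split; first (apply: refl_pre => //; have := card_option T; move=> ->; done).
split; first by apply/(cr_pre adj fs).
split; first by apply/(type_pre adj fs).
rewrite (vec_pre adj fs).
apply: (eq_from_nth (x0:=0)).
  by rewrite size_map size_rev size_iota sz sa.
move=> j; rewrite size_map size_rev size_iota => jlt.
rewrite (nth_map 0) ?size_rev ?size_iota // nth_rev ?size_iota //.
rewrite nth_iota; last by lia.
rewrite card_opt Hnth ?sa // -Hx (nth_map 0) ?size_rev ?size_iota //.
rewrite nth_rev ?size_iota // nth_iota; last by lia.
congr (_ + _); case: eqP => [->|ne].
  have e : 1 + (alpha - i.+1) = alpha - i by lia.
  by rewrite e v0X.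
rewrite (negbTE (X_disj (k := alpha - i) _ _ _ v0X)) //.
  by apply/andP; split; lia.
by apply/eqP; lia.
Qed.

Lemma main_aux r y n : forall x,
  \sum_(j < size y) (nth 0 y j - nth 0 x j) = n ->
  realizable r x -> size y = size x ->
  (forall i, i < size x -> nth 0 x i <= nth 0 y i) -> realizable r y.
Proof.
elim: n => [|n IH] x Hm Hx sz Hle.
  have -> : y = x; last done.
  apply: (eq_from_nth (x0:=0)) => // i ilt.
  move: Hm; rewrite (bigD1 (Ordinal ilt)) //= => /eqP; rewrite addn_eq0 => /andP[/eqP h _].
  have := Hle i; rewrite -sz => /(_ ilt); lia.
case: (boolP [exists i : 'I_(size y), nth 0 x i < nth 0 y i]); last first.
  rewrite negb_exists => /forallP H.
  move: Hm; rewrite big1 // => j _; have := H j; have := Hle j; rewrite -sz => /(_ (ltn_ord j)).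
  lia.
case/existsP => i lt.
have ilt : i < size x by rewrite -sz.
set x' := set_nth 0 x i (nth 0 x i).+1.
have sx' : size x' = size x by rewrite size_set_nth; apply/maxn_idPr.
apply: (IH x').
- rewrite (bigD1 i) //= in Hm; rewrite (bigD1 i) //= /x' nth_set_nth /= eqxx.
  rewrite (eq_bigr (fun j : 'I_(size y) => nth 0 y j - nth 0 x j)); first by move: Hm lt; lia.
  move=> j ji; rewrite nth_set_nth /=; case: eqP => // e; by rewrite (val_inj e) eqxx in ji.
- apply: (step_lemma Hx ilt sx') => j _; rewrite /x' nth_set_nth /=.
  by case: eqP => [->|_]; rewrite ?addn1 ?addn0.
- by rewrite sx'.
- move=> j; rewrite sx' => jl; rewrite /x' nth_set_nth /=.
  case: eqP => [->|_]; [exact: lt | exact: Hle].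
Qed.

Theorem lemma3p6 (r : nat) (x y : seq nat) :
  r <= 1 ->
  realizable r x ->
  size y = size x ->
  (forall i, i < size x -> nth 0 x i <= nth 0 y i) ->
  realizable r y.
Proof.
move=> _; exact: (main_aux (erefl _)).
Qed.
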